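(* Let $k$ be a field. The map sending a generic configuration of four flags $([x_m],[f_m])_{1\le m\le 4}$ in $k^3$ to the $4$-tuple $(z_{12},z_{21},z_{34},z_{43})$ of its edge coordinates induces a bijection from the set of generic configurations of four flags modulo the diagonal action of $\mathrm{PGL}(3,k)$ onto $(k\setminus\{0,1\})^4$. In other words, a tetrahedron of flags is parametrized by the $4$-tuple $(z_{12},z_{21},z_{34},z_{43})$ of elements of $k\setminus\{0,1\}$.
   Context: A flag in $V=k^3$ is a pair $([x],[f])\in\mathbb{P}(V)\times\mathbb{P}(V^* )$ with $f(x)=0$. A tetrahedron of flags (generic configuration of four flags) is an ordered $4$-tuple of flags $([x_m],[f_m])$ such that the points $[x_m]$ are pairwise distinct with no three collinear, and $f_m(x_n)\neq0$ for $m\neq n$. For distinct $i,j$, choose $k',l$ with $(1,2,3,4)\mapsto(i,j,k',l)$ an even permutation and set $z_{ij}=\frac{f_i(x_{k'})\det(x_i,x_j,x_l)}{f_i(x_l)\det(x_i,x_j,x_{k'})}$ (equivalently, the cross-ratio $[\ker f_i,(x_ix_j),(x_ix_{k'}),(x_ix_l)]$ in the pencil of lines through $[x_i]$, with the convention that the cross-ratio of $p_1,p_2,p_3,p_4$ is $\frac{(p_1-p_3)(p_2-p_4)}{(p_1-p_4)(p_2-p_3)}$). *)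

(* Defs.v *)
From HB Require Import structures.
From mathcomp Require Import all_boot all_order all_algebra.
Set Implicit Arguments. Unset Strict Implicit. Unset Printing Implicit Defensive.
Import Order.TTheory GRing.Theory Num.Theory.
Local Open Scope ring_scope.

(* Vectors of V = K^3 are column vectors, covectors (elements of V^* ) are
   row vectors; f(x) is the 1x1 product. *)
Definition app (K : fieldType) (f : 'rV[K]_3) (x : 'cV[K]_3) : K := (f *m x) 0 0.

Definition det3 (K : fieldType) (x y z : 'cV[K]_3) : K :=
  \det (\matrix_(a < 3, b < 3) (nth 0 [:: x; y; z] b) a 0).

(* [x] = [y] in P(V) (or P(V^* ) for row vectors) *)
Definition proj_eq (K : fieldType) (p q : nat) (x y : 'M[K]_(p, q)) : Prop :=
  exists c : K, c != 0 /\ x = c *: y.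

Definition is_flag (K : fieldType) (x : 'cV[K]_3) (f : 'rV[K]_3) : Prop :=
  x != 0 /\ f != 0 /\ app f x = 0.

Definition tetrahedron (K : fieldType) (x : 'I_4 -> 'cV[K]_3)
    (f : 'I_4 -> 'rV[K]_3) : Prop :=
  (forall m, is_flag (x m) (f m)) /\
  (forall m n, m != n -> ~ proj_eq (x m) (x n)) /\
  (forall m n p, m != n -> n != p -> m != p -> det3 (x m) (x n) (x p) != 0) /\
  (forall m n, m != n -> app (f m) (x n) != 0).

Definition ninv (s : seq 'I_4) : nat :=
  sumn [seq sumn [seq nat_of_bool (nth ord0 s q < nth ord0 s p)%N
                   | q <- iota p.+1 (size s - p.+1)]
       | p <- iota 0 (size s)].

(* For distinct i, j: the pair (k', l) such that (1,2,3,4) |-> (i,j,k',l) is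
   an even permutation. *)
Definition compl_pair (i j : 'I_4) : 'I_4 * 'I_4 :=
  let rest := [seq m <- enum 'I_4 | (m != i) && (m != j)] in
  let a := nth ord0 rest 0 in
  let b := nth ord0 rest 1 in
  if odd (ninv [:: i; j; a; b]) then (b, a) else (a, b).

Definition zcoord (K : fieldType) (x : 'I_4 -> 'cV[K]_3)
    (f : 'I_4 -> 'rV[K]_3) (i j : 'I_4) : K :=
  let k' := (compl_pair i j).1 in
  let l := (compl_pair i j).2 in
  (app (f i) (x k') * det3 (x i) (x j) (x l)) /
  (app (f i) (x l) * det3 (x i) (x j) (x k')).

(* the 4-tuple (z12, z21, z34, z43); indices shifted to 'I_4 = {0,..,3} *)
Definition edge_coords (K : fieldType) (x : 'I_4 -> 'cV[K]_3)
    (f : 'I_4 -> 'rV[K]_3) : K * K * K * K :=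
  (zcoord x f (inord 0) (inord 1), zcoord x f (inord 1) (inord 0),
   zcoord x f (inord 2) (inord 3), zcoord x f (inord 3) (inord 2)).

(* Two configurations define the same point of (flags^4)/PGL(3,K): there is
   g in GL(3,K) with [x'_m] = [g x_m] and [f'_m] = [f_m o g^{-1}] for all m. *)
Definition pgl_equiv (K : fieldType) (x : 'I_4 -> 'cV[K]_3)
    (f : 'I_4 -> 'rV[K]_3) (x' : 'I_4 -> 'cV[K]_3) (f' : 'I_4 -> 'rV[K]_3)
    : Prop :=
  exists g : 'M[K]_3, g \in unitmx /\
    forall m, proj_eq (x' m) (g *m x m) /\ proj_eq (f' m) (f m *m invmx g).

Definition not01 (K : fieldType) (a : K) : Prop := a != 0 /\ a != 1.

(* Main.v *)
Require Import Defs.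
From HB Require Import structures.
From mathcomp Require Import all_boot all_order all_algebra.
From mathcomp Require Import ring.
Import GRing.Theory.
Local Open Scope ring_scope.
Set Implicit Arguments. Unset Strict Implicit.

Definition j0 : 'I_4 := @Ordinal 4 0 isT.
Definition j1 : 'I_4 := @Ordinal 4 1 isT.
Definition j2 : 'I_4 := @Ordinal 4 2 isT.
Definition j3 : 'I_4 := @Ordinal 4 3 isT.
Definition o0 : 'I_3 := @Ordinal 3 0 isT.
Definition o1 : 'I_3 := @Ordinal 3 1 isT.
Definition o2 : 'I_3 := @Ordinal 3 2 isT.

Lemma enum4 : enum 'I_4 = [:: j0; j1; j2; j3].
Proof. apply: (inj_map val_inj). by rewrite val_enum_ord. Qed.
Lemma inord0 : inord 0 = j0. Proof. by apply/val_inj; rewrite /= inordK. Qed.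
Lemma inord1 : inord 1 = j1. Proof. by apply/val_inj; rewrite /= inordK. Qed.
Lemma inord2 : inord 2 = j2. Proof. by apply/val_inj; rewrite /= inordK. Qed.
Lemma inord3 : inord 3 = j3. Proof. by apply/val_inj; rewrite /= inordK. Qed.

Lemma cp01 : compl_pair j0 j1 = (j2, j3).
Proof. rewrite /compl_pair enum4. vm_compute. reflexivity. Qed.
Lemma cp10 : compl_pair j1 j0 = (j3, j2).
Proof. rewrite /compl_pair enum4. vm_compute. reflexivity. Qed.
Lemma cp23 : compl_pair j2 j3 = (j0, j1).
Proof. rewrite /compl_pair enum4. vm_compute. reflexivity. Qed.
Lemma cp32 : compl_pair j3 j2 = (j1, j0).
Proof. rewrite /compl_pair enum4. vm_compute. reflexivity. Qed.

Lemma ord4 (m : 'I_4) : m = j0 \/ m = j1 \/ m = j2 \/ m = j3.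
Proof.
case: m => [[|[|[|[|m]]]] Hm].
- by left; apply/val_inj.
- by right; left; apply/val_inj.
- by right; right; left; apply/val_inj.
- by right; right; right; apply/val_inj.
- by [].
Qed.

Lemma ord3 (m : 'I_3) : m = o0 \/ m = o1 \/ m = o2.
Proof.
case: m => [[|[|[|m]]] Hm].
- by left; apply/val_inj.
- by right; left; apply/val_inj.
- by right; right; apply/val_inj.
- by [].
Qed.

Lemma sum3 (K : fieldType) (F : 'I_3 -> K) : \sum_i F i = F o0 + F o1 + F o2.
Proof.
rewrite !big_ord_recr big_ord0 /= add0r; congr (_ + _ + _); congr F; exact/val_inj.
Qed.

Lemma det2E (K : fieldType) (A : 'M[K]_2) : \det A = A 0 0 * A 1 1 - A 0 1 * A 1 0.
Proof.
rewrite (expand_det_row _ 0) !big_ord_recr big_ord0 /= add0r /cofactor.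
rewrite !det_mx11 /= !mxE /=.
have e1 : widen_ord (leqnSn 1) (@ord_max 0) = 0 by apply/val_inj.
have e2 : lift (0 : 'I_2) (0 : 'I_1) = 1 by apply/val_inj.
have e3 : lift (@ord_max 1) (0 : 'I_1) = 0 by apply/val_inj.
have e4 : @ord_max 1 = 1 by apply/val_inj.
rewrite e1 e2 e3 e4 expr0 expr1. ring.
Qed.

Lemma detM3 (K : fieldType) (A : 'M[K]_3) : \det A =
  A o0 o0 * (A o1 o1 * A o2 o2 - A o1 o2 * A o2 o1)
  - A o0 o1 * (A o1 o0 * A o2 o2 - A o1 o2 * A o2 o0)
  + A o0 o2 * (A o1 o0 * A o2 o1 - A o1 o1 * A o2 o0).
Proof.
rewrite (expand_det_row _ 0) !big_ord_recr big_ord0 /= add0r /cofactor.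
rewrite !det2E /= !mxE /=.
set B := fun a b : nat => A (inord a) (inord b).
have HA : forall i j, A i j = B i j by move=> i j; rewrite /B !inord_val.
rewrite !HA /=.
rewrite /bump /= (_ : (1 %% 2 = 1)%N) // /=. ring.
Qed.

Lemma det3E (K : fieldType) (x y z : 'cV[K]_3) : det3 x y z =
  x o0 0 * (y o1 0 * z o2 0 - z o1 0 * y o2 0)
  - y o0 0 * (x o1 0 * z o2 0 - z o1 0 * x o2 0)
  + z o0 0 * (x o1 0 * y o2 0 - y o1 0 * x o2 0).
Proof. rewrite /det3 detM3 !mxE /=. ring. Qed.

Lemma appE (K : fieldType) (f : 'rV[K]_3) (v : 'cV[K]_3) :
  app f v = f 0 o0 * v o0 0 + f 0 o1 * v o1 0 + f 0 o2 * v o2 0.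
Proof. by rewrite /app mxE sum3. Qed.

Lemma mulmxE3 (K : fieldType) (g : 'M[K]_3) (v : 'cV[K]_3) a :
  (g *m v) a 0 = g a o0 * v o0 0 + g a o1 * v o1 0 + g a o2 * v o2 0.
Proof. by rewrite mxE sum3. Qed.

Lemma det3_lin (K : fieldType) (g : 'M[K]_3) (a b c : K) (x y z : 'cV[K]_3) :
  det3 (a *: (g *m x)) (b *: (g *m y)) (c *: (g *m z)) = a * b * c * \det g * det3 x y z.
Proof. rewrite !det3E detM3 !mxE !sum3. ring. Qed.

Lemma det3Z (K : fieldType) (a b c : K) (x y z : 'cV[K]_3) :
  det3 (a *: x) (b *: y) (c *: z) = a * b * c * det3 x y z.
Proof. rewrite !det3E !mxE. ring. Qed.
Lemma appZ (K : fieldType) (g : 'M[K]_3) (c d : K) (f : 'rV[K]_3) (v : 'cV[K]_3) :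
  g \in unitmx -> app (d *: (f *m invmx g)) (c *: (g *m v)) = d * c * app f v.
Proof.
move=> gu; rewrite /app -scalemxAl -scalemxAr mulmxA -(mulmxA f) mulVmx // mulmx1.
by rewrite !mxE mulrA.
Qed.

Lemma scale_div (K : fieldType) (l a b : K) : l != 0 -> (l * a) / (l * b) = a / b.
Proof. by move=> l0; rewrite invfM mulrACA divff // mul1r. Qed.

Lemma detu (K : fieldType) (g : 'M[K]_3) : g \in unitmx -> \det g != 0.
Proof. by rewrite unitmxE unitfE. Qed.

Lemma zinv (K : fieldType) (x x' : 'I_4 -> 'cV[K]_3) (f f' : 'I_4 -> 'rV[K]_3) :
  pgl_equiv x f x' f' -> forall i j, zcoord x' f' i j = zcoord x f i j.
Proof.
case=> g [gu H] i j; rewrite /zcoord.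
set k := (compl_pair i j).1; set l := (compl_pair i j).2.
case: (H i) => [[ci [ci0 ->]] [di [di0 ->]]].
case: (H j) => [[cj [cj0 ->]] _].
case: (H k) => [[ck [ck0 ->]] _].
case: (H l) => [[cl [cl0 ->]] _].
rewrite !appZ // !det3_lin.
have l0 : di * ci * cj * ck * cl * \det g != 0.
  by rewrite !mulf_neq0 // detu.
rewrite -[RHS](@scale_div _ _ _ _ l0); congr (_ / _); ring.
Qed.

Lemma edge_inv (K : fieldType) (x x' : 'I_4 -> 'cV[K]_3) (f f' : 'I_4 -> 'rV[K]_3) :
  pgl_equiv x f x' f' -> edge_coords x f = edge_coords x' f'.
Proof. by move=> H; rewrite /edge_coords !(@zinv _ _ _ _ _ H). Qed.

Lemma pgl_sym (K : fieldType) (x x' : 'I_4 -> 'cV[K]_3) (f f' : 'I_4 -> 'rV[K]_3) :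
  pgl_equiv x f x' f' -> pgl_equiv x' f' x f.
Proof.
case=> g [gu H]; exists (invmx g); split; first by rewrite unitmx_inv.
move=> m; case: (H m) => [[c [c0 Hx]] [d [d0 Hf]]]; split.
- exists c^-1; split; first by rewrite invr_eq0.
  by rewrite Hx -scalemxAr scalerA mulVf // scale1r mulKmx.
- exists d^-1; split; first by rewrite invr_eq0.
  by rewrite invmxK Hf -scalemxAl scalerA mulVf // scale1r mulmxKV.
Qed.

Lemma invmxM3 (K : fieldType) (a b : 'M[K]_3) : a \in unitmx -> b \in unitmx ->
  invmx (a *m b) = invmx b *m invmx a.
Proof.
move=> au bu.
have abu : a *m b \in unitmx by rewrite unitmx_mul au bu.
have E : (a *m b) *m (invmx b *m invmx a) = 1%:M.
  by rewrite -mulmxA (mulmxA b) mulmxV // mul1mx mulmxV.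
by rewrite -[LHS]mulmx1 -E mulmxA mulVmx // mul1mx.
Qed.

Lemma pgl_trans (K : fieldType) (x x' x'' : 'I_4 -> 'cV[K]_3) (f f' f'' : 'I_4 -> 'rV[K]_3) :
  pgl_equiv x f x' f' -> pgl_equiv x' f' x'' f'' -> pgl_equiv x f x'' f''.
Proof.
case=> g1 [g1u H1] [g2 [g2u H2]]; exists (g2 *m g1); split.
  by rewrite unitmx_mul g1u g2u.
move=> m; case: (H1 m) => [[c1 [c10 Hx1]] [d1 [d10 Hf1]]].
case: (H2 m) => [[c2 [c20 Hx2]] [d2 [d20 Hf2]]]; split.
- exists (c2 * c1); split; first by rewrite mulf_neq0.
  by rewrite Hx2 Hx1 -scalemxAr scalerA mulmxA.
- exists (d2 * d1); split; first by rewrite mulf_neq0.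
  by rewrite Hf2 Hf1 -scalemxAl scalerA invmxM3 // mulmxA.
Qed.
Definition frame (K : fieldType) (m : 'I_4) : 'cV[K]_3 :=
  \col_(a < 3) (if (val m == 3)%N then 1 else if (val a == val m)%N then 1 else 0).

Lemma fr0 (K : fieldType) (f : 'rV[K]_3) : app f (frame K j0) = f 0 o0.
Proof. rewrite appE !mxE /=. ring. Qed.
Lemma fr1 (K : fieldType) (f : 'rV[K]_3) : app f (frame K j1) = f 0 o1.
Proof. rewrite appE !mxE /=. ring. Qed.
Lemma fr2 (K : fieldType) (f : 'rV[K]_3) : app f (frame K j2) = f 0 o2.
Proof. rewrite appE !mxE /=. ring. Qed.
Lemma fr3 (K : fieldType) (f : 'rV[K]_3) : app f (frame K j3) = f 0 o0 + f 0 o1 + f 0 o2.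
Proof. rewrite appE !mxE /=. ring. Qed.
Lemma app3 (K : fieldType) (f : 'rV[K]_3) :
  app f (frame K j3) = app f (frame K j0) + app f (frame K j1) + app f (frame K j2).
Proof. by rewrite fr0 fr1 fr2 fr3. Qed.

Lemma edge_frame (K : fieldType) (F : 'I_4 -> 'rV[K]_3) :
  edge_coords (frame K) F =
  (app (F j0) (frame K j2) / app (F j0) (frame K j3),
   app (F j1) (frame K j3) / app (F j1) (frame K j2),
   - (app (F j2) (frame K j0) / app (F j2) (frame K j1)),
   - (app (F j3) (frame K j1) / app (F j3) (frame K j0))).
Proof.
rewrite /edge_coords inord0 inord1 inord2 inord3 /zcoord cp01 cp10 cp23 cp32 /=.
rewrite !det3E !mxE /=.
rewrite !(mul0r,mulr0,mul1r,mulr1,subr0,sub0r,addr0,add0r,oppr0,opprK).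
by rewrite !mulrN1 !invrN !mulrNN !mulrN.
Qed.
Lemma cram (K : fieldType) (D p q r u v w t : K) : D != 0 ->
  p * u + q * v + r * w = t * D -> p / D * u + q / D * v + r / D * w = t.
Proof. move=> D0 H; apply: (mulIf D0); rewrite -H. field. done. Qed.

Lemma normalize (K : fieldType) (x : 'I_4 -> 'cV[K]_3) (f : 'I_4 -> 'rV[K]_3) :
  tetrahedron x f -> exists F, pgl_equiv x f (frame K) F /\
    (forall m, app (F m) (frame K m) = 0) /\
    (forall m n, m != n -> app (F m) (frame K n) != 0).
Proof.
case=> [Hfl [_ [Hdet Happ]]].
set D := det3 (x j0) (x j1) (x j2).
have D0 : D != 0 by apply: Hdet.
set c0 := det3 (x j3) (x j1) (x j2) / D.
set c1 := det3 (x j0) (x j3) (x j2) / D.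
set c2 := det3 (x j0) (x j1) (x j3) / D.
have c00 : c0 != 0 by rewrite mulf_neq0 ?invr_eq0 //; apply: Hdet.
have c10 : c1 != 0 by rewrite mulf_neq0 ?invr_eq0 //; apply: Hdet.
have c20 : c2 != 0 by rewrite mulf_neq0 ?invr_eq0 //; apply: Hdet.
pose cc := fun m : 'I_4 => nth 1 [:: c0; c1; c2; 1] m.
have cc0 : forall m, cc m != 0.
  by move=> m; case: (ord4 m) => [->|[->|[->|->]]] //=; rewrite oner_eq0.
pose N := \matrix_(a < 3, b < 3) (nth 0 [:: c0 *: x j0; c1 *: x j1; c2 *: x j2] b) a 0 : 'M[K]_3.
have detN : \det N = c0 * c1 * c2 * D by rewrite /D -det3Z.
have Nu : N \in unitmx.
  rewrite unitmxE unitfE detN.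
  by apply: mulf_neq0 => //; apply: mulf_neq0 => //; apply: mulf_neq0.
have NF : forall m, N *m frame K m = cc m *: x m.
  move=> m; apply/colP => a; rewrite mulmxE3 !mxE.
  case: (ord4 m) => [->|[->|[->|->]]]; rewrite /cc /= ?mxE /=.
  - ring.
  - ring.
  - ring.
  - rewrite !mulr1 mul1r /c0 /c1 /c2; apply: cram => //.
    case: (ord3 a) => [->|[->|->]]; rewrite /D !det3E; ring.
exists (fun m => f m *m N); split.
  exists (invmx N); split; first by rewrite unitmx_inv.
  move=> m; split.
  - exists (cc m); split => //.
    by rewrite scalemxAr -NF mulKmx.
  - exists 1; split; first by rewrite oner_eq0.
    by rewrite invmxK scale1r.
have E : forall m n, app (f m *m N) (frame K n) = cc n * app (f m) (x n).
  by move=> m n; rewrite /app -mulmxA NF -scalemxAr mxE.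
split.
- by move=> m; rewrite E; case: (Hfl m) => _ [_ ->]; rewrite mulr0.
- by move=> m n mn; rewrite E mulf_neq0 // Happ.
Qed.
Lemma div1 (K : fieldType) (a b : K) : b != 0 -> a / b = 1 -> a = b.
Proof. by move=> b0 H; rewrite -(divfK b0 a) H mul1r. Qed.

Lemma divN1 (K : fieldType) (a b : K) : b != 0 -> - (a / b) = 1 -> a = - b.
Proof. by move=> b0 H; rewrite -(divfK b0 a) -[a / b]opprK H mulN1r. Qed.

Lemma ndiv (K : fieldType) (a b : K) : a != 0 -> b != 0 -> a / b != 0.
Proof. by move=> a0 b0; rewrite mulf_neq0 ?invr_eq0. Qed.

Lemma alg1_0 (K : fieldType) (u0 u1 u2 u3 : K) : u3 = u0 + u1 + u2 -> u0 = 0 ->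
  u1 != 0 -> u2 != 0 -> u3 != 0 -> not01 (u2 / u3).
Proof.
move=> e z n1 n2 n3; split; first exact: ndiv.
apply/eqP => /(div1 n3) h; move/eqP: n1; apply.
have -> : u1 = u3 - u0 - u2 by rewrite e; ring.
by rewrite z h; ring.
Qed.

Lemma alg1_1 (K : fieldType) (u0 u1 u2 u3 : K) : u3 = u0 + u1 + u2 -> u1 = 0 ->
  u0 != 0 -> u2 != 0 -> u3 != 0 -> not01 (u3 / u2).
Proof.
move=> e z n0 n2 n3; split; first exact: ndiv.
apply/eqP => /(div1 n2) h; move/eqP: n0; apply.
have -> : u0 = u3 - u1 - u2 by rewrite e; ring.
by rewrite z h; ring.
Qed.

Lemma alg1_2 (K : fieldType) (u0 u1 u2 u3 : K) : u3 = u0 + u1 + u2 -> u2 = 0 ->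
  u0 != 0 -> u1 != 0 -> u3 != 0 -> not01 (- (u0 / u1)).
Proof.
move=> e z n0 n1 n3; split; first by rewrite oppr_eq0 ndiv.
apply/eqP => /(divN1 n1) h; move/eqP: n3; apply.
by rewrite e z h; ring.
Qed.

Lemma alg1_3 (K : fieldType) (u0 u1 u2 u3 : K) : u3 = u0 + u1 + u2 -> u3 = 0 ->
  u0 != 0 -> u1 != 0 -> u2 != 0 -> not01 (- (u1 / u0)).
Proof.
move=> e z n0 n1 n2; split; first by rewrite oppr_eq0 ndiv.
apply/eqP => /(divN1 n0) h; move/eqP: n2; apply.
have -> : u2 = u3 - u0 - u1 by rewrite e; ring.
by rewrite z h; ring.
Qed.

Definition propv (K : fieldType) (u0 u1 u2 v0 v1 v2 : K) :=
  exists d, d != 0 /\ v0 = d * u0 /\ v1 = d * u1 /\ v2 = d * u2.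

Lemma cross (K : fieldType) (a b c d : K) : b != 0 -> d != 0 -> a / b = c / d -> a * d = c * b.
Proof. by move=> b0 d0 h; apply/eqP; rewrite -eqr_div // h. Qed.

Lemma alg3_0 (K : fieldType) (u0 u1 u2 u3 v0 v1 v2 v3 : K) :
  u3 = u0 + u1 + u2 -> v3 = v0 + v1 + v2 -> u0 = 0 -> v0 = 0 ->
  u2 != 0 -> v2 != 0 -> u3 != 0 -> v3 != 0 -> u2 / u3 = v2 / v3 -> propv u0 u1 u2 v0 v1 v2.
Proof.
move=> eu ev zu zv n2 m2 n3 m3 h; have cr := cross n3 m3 h.
exists (v2 / u2); split; first exact: ndiv.
split; first by rewrite zu zv mulr0.
split; last by rewrite divfK.
have -> : v1 = v3 - v0 - v2 by rewrite ev; ring.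
have -> : u1 = u3 - u0 - u2 by rewrite eu; ring.
have -> : v3 = v2 * u3 / u2 by rewrite -cr; field.
rewrite zu zv; field; done.
Qed.

Lemma alg3_1 (K : fieldType) (u0 u1 u2 u3 v0 v1 v2 v3 : K) :
  u3 = u0 + u1 + u2 -> v3 = v0 + v1 + v2 -> u1 = 0 -> v1 = 0 ->
  u2 != 0 -> v2 != 0 -> u3 != 0 -> v3 != 0 -> u3 / u2 = v3 / v2 -> propv u0 u1 u2 v0 v1 v2.
Proof.
move=> eu ev zu zv n2 m2 n3 m3 h; have cr := cross n2 m2 h.
exists (v2 / u2); split; first exact: ndiv.
split; last by split; [rewrite zu zv mulr0 | rewrite divfK].
have -> : v0 = v3 - v1 - v2 by rewrite ev; ring.
have -> : u0 = u3 - u1 - u2 by rewrite eu; ring.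
have -> : v3 = u3 * v2 / u2 by rewrite cr; field.
rewrite zu zv; field; done.
Qed.

Lemma alg3_2 (K : fieldType) (u0 u1 u2 v0 v1 v2 : K) :
  u2 = 0 -> v2 = 0 ->
  u1 != 0 -> v1 != 0 -> - (u0 / u1) = - (v0 / v1) -> propv u0 u1 u2 v0 v1 v2.
Proof.
move=> zu zv n1 m1 h; have cr := cross n1 m1 (oppr_inj h).
exists (v1 / u1); split; first exact: ndiv.
split; last by split; [rewrite divfK | rewrite zu zv mulr0].
have -> : v0 = u0 * v1 / u1 by rewrite cr; field.
field; done.
Qed.

Lemma alg3_3 (K : fieldType) (u0 u1 u2 u3 v0 v1 v2 v3 : K) :
  u3 = u0 + u1 + u2 -> v3 = v0 + v1 + v2 -> u3 = 0 -> v3 = 0 ->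
  u0 != 0 -> v0 != 0 -> - (u1 / u0) = - (v1 / v0) -> propv u0 u1 u2 v0 v1 v2.
Proof.
move=> eu ev zu zv n0 m0 h; have cr := cross n0 m0 (oppr_inj h).
have e1 : v1 = u1 * v0 / u0 by rewrite cr; field.
exists (v0 / u0); split; first exact: ndiv.
split; first by rewrite divfK.
split; first by rewrite e1; field.
have -> : v2 = v3 - v0 - v1 by rewrite ev; ring.
have -> : u2 = u3 - u0 - u1 by rewrite eu; ring.
rewrite zu zv e1; field; done.
Qed.
Lemma frame_distinct (K : fieldType) (m n : 'I_4) : m != n -> ~ proj_eq (frame K m) (frame K n).
Proof.
case: (ord4 m) => [->|[->|[->|->]]]; case: (ord4 n) => [->|[->|[->|->]]] //= _ [c [c0 E]];
have e0 := congr1 (fun M : 'cV[K]_3 => M o0 0) E; have e1 := congr1 (fun M : 'cV[K]_3 => M o1 0) E;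
have e2 := congr1 (fun M : 'cV[K]_3 => M o2 0) E; rewrite !mxE /= ?(mulr0, mulr1) in e0 e1 e2;
first [ by move/eqP: e0; rewrite oner_eq0 | by move/eqP: e1; rewrite oner_eq0
      | by move/eqP: e2; rewrite oner_eq0 | by move: c0; rewrite -e0 eqxx
      | by move: c0; rewrite -e1 eqxx | by move: c0; rewrite -e2 eqxx ].
Qed.

Lemma frame_det (K : fieldType) (m n p : 'I_4) : m != n -> n != p -> m != p ->
  det3 (frame K m) (frame K n) (frame K p) != 0.
Proof.
case: (ord4 m) => [->|[->|[->|->]]]; case: (ord4 n) => [->|[->|[->|->]]] //=;
case: (ord4 p) => [->|[->|[->|->]]] //= _ _ _; rewrite det3E !mxE /=;
rewrite !(mul0r,mulr0,mul1r,mulr1,subr0,sub0r,addr0,add0r,oppr0,opprK);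
by rewrite ?oppr_eq0 oner_eq0.
Qed.

Lemma frame_tet (K : fieldType) (F : 'I_4 -> 'rV[K]_3) :
  (forall m, app (F m) (frame K m) = 0) ->
  (forall m n, m != n -> app (F m) (frame K n) != 0) -> tetrahedron (frame K) F.
Proof.
move=> H0 Hn; split; last split; [|exact: frame_distinct|split; [exact: frame_det|exact: Hn]].
move=> m.
have [n mn] : exists n, m != n.
  by case: (ord4 m) => [->|[->|[->|->]]]; [exists j1|exists j0|exists j0|exists j0].
split; [|split; [|exact: H0]].
- apply/eqP => E; move: (Hn n m); rewrite eq_sym mn => /(_ isT).
  by rewrite E /app mulmx0 mxE eqxx.
- apply/eqP => E; move: (Hn m n mn).
  by rewrite E /app mul0mx mxE eqxx.
Qed.
Theorem mainTheorem2 (K : fieldType) :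
  (* the coordinates (z12, z21, z34, z43) take values in (K \ {0,1})^4 *)
  (forall (x : 'I_4 -> 'cV[K]_3) (f : 'I_4 -> 'rV[K]_3) (a b c d : K),
     tetrahedron x f -> edge_coords x f = (a, b, c, d) ->
     not01 a /\ not01 b /\ not01 c /\ not01 d) /\
  (* the map is well defined on PGL(3,K)-orbits *)
  (forall (x x' : 'I_4 -> 'cV[K]_3) (f f' : 'I_4 -> 'rV[K]_3),
     tetrahedron x f -> tetrahedron x' f' ->
     pgl_equiv x f x' f' -> edge_coords x f = edge_coords x' f') /\
  (* the induced map on orbits is injective *)
  (forall (x x' : 'I_4 -> 'cV[K]_3) (f f' : 'I_4 -> 'rV[K]_3),
     tetrahedron x f -> tetrahedron x' f' ->
     edge_coords x f = edge_coords x' f' -> pgl_equiv x f x' f') /\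
  (* and surjective onto (K \ {0,1})^4 *)
  (forall a b c d : K, not01 a -> not01 b -> not01 c -> not01 d ->
     exists (x : 'I_4 -> 'cV[K]_3) (f : 'I_4 -> 'rV[K]_3),
       tetrahedron x f /\ edge_coords x f = (a, b, c, d)).
Proof.
split; last split; last split.
- move=> x f a b c d T E.
  have [F [Heq [H0 Hn]]] := normalize T.
  rewrite (edge_inv Heq) edge_frame in E; case: E => <- <- <- <-.
  split; last split; last split.
  + exact: (alg1_0 (app3 (F j0)) (H0 j0) (Hn j0 j1 isT) (Hn j0 j2 isT) (Hn j0 j3 isT)).
  + exact: (alg1_1 (app3 (F j1)) (H0 j1) (Hn j1 j0 isT) (Hn j1 j2 isT) (Hn j1 j3 isT)).
  + exact: (alg1_2 (app3 (F j2)) (H0 j2) (Hn j2 j0 isT) (Hn j2 j1 isT) (Hn j2 j3 isT)).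
  + exact: (alg1_3 (app3 (F j3)) (H0 j3) (Hn j3 j0 isT) (Hn j3 j1 isT) (Hn j3 j2 isT)).
- by move=> x x' f f' _ _; apply: edge_inv.
- move=> x x' f f' T T' E.
  have [F [Heq [H0 Hn]]] := normalize T.
  have [F' [Heq' [H0' Hn']]] := normalize T'.
  rewrite (edge_inv Heq) (edge_inv Heq') !edge_frame in E; case: E => e0 e1 e2 e3.
  apply: (pgl_trans Heq); apply: pgl_trans (pgl_sym Heq').
  exists 1%:M; split; first exact: unitmx1.
  have key : forall m, exists dd, dd != 0 /\ F' m = dd *: F m.
    move=> m.
    suff : propv (app (F m) (frame K j0)) (app (F m) (frame K j1)) (app (F m) (frame K j2))
                 (app (F' m) (frame K j0)) (app (F' m) (frame K j1)) (app (F' m) (frame K j2)).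
      case=> dd [d0 [h0 [h1 h2]]]; exists dd; split => //; apply/rowP => i; rewrite mxE.
      by case: (ord3 i) => [->|[->|->]]; [move: h0; rewrite !fr0 | move: h1; rewrite !fr1 | move: h2; rewrite !fr2].
    case: (ord4 m) => [->|[->|[->|->]]].
    * exact: (alg3_0 (app3 (F j0)) (app3 (F' j0)) (H0 j0) (H0' j0) (Hn j0 j2 isT)
              (Hn' j0 j2 isT) (Hn j0 j3 isT) (Hn' j0 j3 isT) e0).
    * exact: (alg3_1 (app3 (F j1)) (app3 (F' j1)) (H0 j1) (H0' j1) (Hn j1 j2 isT)
              (Hn' j1 j2 isT) (Hn j1 j3 isT) (Hn' j1 j3 isT) e1).
    * exact: (alg3_2 (H0 j2) (H0' j2) (Hn j2 j1 isT) (Hn' j2 j1 isT) e2).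
    * exact: (alg3_3 (app3 (F j3)) (app3 (F' j3)) (H0 j3) (H0' j3) (Hn j3 j0 isT)
              (Hn' j3 j0 isT) e3).
  move=> m; case: (key m) => dd [d0 hd]; split.
  + exists 1; split; first by rewrite oner_eq0.
    by rewrite scale1r mul1mx.
  + exists dd; split => //.
    by rewrite invmx1 mulmx1.
- move=> a b c d [a0 a1] [b0 b1] [c0 c1] [d0 d1].
  pose F := fun m : 'I_4 => \row_(i < 3) nth 0 (nth [::] [:: [:: 0; 1 - a; a];
     [:: b - 1; 0; 1]; [:: c; -1; 0]; [:: 1; -d; d - 1]] m) i : 'rV[K]_3.
  exists (frame K), F; split.
  + apply: frame_tet.
    * move=> m; case: (ord4 m) => [->|[->|[->|->]]]; rewrite ?fr0 ?fr1 ?fr2 ?fr3 !mxE /=; ring.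
    * move=> m n; case: (ord4 m) => [->|[->|[->|->]]]; case: (ord4 n) => [->|[->|[->|->]]] //= _;
      rewrite ?fr0 ?fr1 ?fr2 ?fr3 !mxE /= ?add0r ?addr0 ?subrK;
      first [ done | by rewrite oppr_eq0 oner_eq0 | by rewrite subr_eq0
            | by rewrite subr_eq0 eq_sym | by rewrite oner_eq0 | by rewrite oppr_eq0 ].
  + rewrite edge_frame ?fr0 ?fr1 ?fr2 ?fr3 !mxE /=.
    by rewrite ?add0r ?addr0 ?subrK ?divr1 ?invrN1 ?mulrN1 ?opprK.
Qed.
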